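(* For each $k\in\{1,2\}$ there exist a probability space and random variables $A_1,A_2,B_1,B_2,C_k$ on it, each taking values in $\{1,-1\}$, such that $\langle A_i\rangle=\langle B_i\rangle=\langle C_k\rangle=0$ and $\langle A_iB_j\rangle=\langle A_iC_k\rangle=\langle B_iC_k\rangle=0$ for all $i,j\in\{1,2\}$, and moreover: for $k=1$: $\langle A_1B_1C_1\rangle=-1$, $\langle A_2B_2C_1\rangle=-1$, $\langle A_1B_2C_1\rangle=\langle A_2B_1C_1\rangle=0$; for $k=2$: $\langle A_2B_1C_2\rangle=-1$, $\langle A_1B_2C_2\rangle=+1$, $\langle A_2B_2C_2\rangle=\langle A_1B_1C_2\rangle=0$. Furthermore, in every such model for $k=1$ one has $\langle A_1A_2B_1B_2\rangle=1$, in every such model for $k=2$ one has $\langle A_1A_2B_1B_2\rangle=-1$, and the two models can be chosen so that all other correlations among $A_1,A_2,B_1,B_2$ (i.e. the joint distribution of every proper subfamily of these four variables, including $\langle A_1A_2\rangle=\langle B_1B_2\rangle=0$ and $\langle A_iB_1B_2\rangle=\langle B_iA_1A_2\rangle=0$) coincide in the two models.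
   Context: $\langle\cdot\rangle$ denotes expectation. These correlations are the quantum-mechanical predictions of the Greenberger–Horne–Shimony–Zeilinger state $\tfrac{1}{\sqrt2}(|+++\rangle-|---\rangle)$ (in the eigenbasis of $\sigma_z$ for three spin-$1/2$ particles) for the observables $A_1=-\sigma^1_x$, $A_2=-\sigma^1_y$, $B_1=\sigma^2_y$, $B_2=\sigma^2_x$, $C_1=\sigma^3_y$, $C_2=\sigma^3_x$, where $\sigma^i_k$ are Pauli matrices on particle $i$; the compatible sets (contexts) are those containing at most one $A$, one $B$ and one $C$. Thus each model reproduces all quantum predictions for the four contexts $\{A_i,B_j,C_k\}$ with the given $k$. *)

(* Defs.v *)
From HB Require Import structures.
From mathcomp Require Import all_boot all_order all_algebra.
From mathcomp Require Import all_classical all_reals all_analysis.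
Set Implicit Arguments. Unset Strict Implicit. Unset Printing Implicit Defensive.
Import Order.TTheory GRing.Theory Num.Theory.
Local Open Scope ring_scope.
Local Open Scope classical_set_scope.
Local Open Scope ereal_scope.

Definition pm1 {T : Type} {R : realType} (X : T -> R) : Prop :=
  forall w, (X w = 1 \/ X w = -1)%R.

Definition common_model {d} {T : measurableType d} {R : realType}
  (P : probability T R) (A1 A2 B1 B2 C : {RV P >-> R}) : Prop :=
  [/\ pm1 A1, pm1 A2, pm1 B1, pm1 B2 & pm1 C] /\
  [/\ 'E_P[(A1)%R] = 0%E, 'E_P[(A2)%R] = 0%E, 'E_P[(B1)%R] = 0%E, 'E_P[(B2)%R] = 0%E
    & 'E_P[(C)%R] = 0%E] /\
  [/\ 'E_P[(A1 \* B1)%R] = 0%E, 'E_P[(A1 \* B2)%R] = 0%E, 'E_P[(A2 \* B1)%R] = 0%E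
    & 'E_P[(A2 \* B2)%R] = 0%E] /\
  [/\ 'E_P[(A1 \* C)%R] = 0%E, 'E_P[(A2 \* C)%R] = 0%E, 'E_P[(B1 \* C)%R] = 0%E
    & 'E_P[(B2 \* C)%R] = 0%E].

Definition model1 {d} {T : measurableType d} {R : realType}
  (P : probability T R) (A1 A2 B1 B2 C : {RV P >-> R}) : Prop :=
  common_model A1 A2 B1 B2 C /\
  [/\ 'E_P[(A1 \* B1 \* C)%R] = (-1)%:E, 'E_P[(A2 \* B2 \* C)%R] = (-1)%:E,
      'E_P[(A1 \* B2 \* C)%R] = 0%E & 'E_P[(A2 \* B1 \* C)%R] = 0%E].

Definition model2 {d} {T : measurableType d} {R : realType}
  (P : probability T R) (A1 A2 B1 B2 C : {RV P >-> R}) : Prop :=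
  common_model A1 A2 B1 B2 C /\
  [/\ 'E_P[(A2 \* B1 \* C)%R] = (-1)%:E, 'E_P[(A1 \* B2 \* C)%R] = 1%E,
      'E_P[(A2 \* B2 \* C)%R] = 0%E & 'E_P[(A1 \* B1 \* C)%R] = 0%E].

Definition fam4 {T : Type} {R : realType} (A1 A2 B1 B2 : T -> R)
  (i : 'I_4) : T -> R :=
  match val i with 0 => A1 | 1 => A2 | 2 => B1 | _ => B2 end.

Definition joint_event {T : Type} {R : realType} (F : 'I_4 -> T -> R)
  (S : {set 'I_4}) (s : 'I_4 -> R) : set T :=
  [set w | forall i, i \in S -> (F i w = s i)%R].

(* Main.v *)
Require Import Defs.
From HB Require Import structures.
From mathcomp Require Import all_boot all_order all_algebra.
From mathcomp Require Import all_classical all_reals all_analysis.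
From mathcomp Require Import measurable_realfun lebesgue_integral ring lra.
Import Order.TTheory GRing.Theory Num.Theory.
Local Open Scope ring_scope.
Local Open Scope classical_set_scope.
Local Open Scope ereal_scope.

Section key.
Context {d} {T : measurableType d} {R : realType} (P : probability T R).

Lemma Lfun_pm {X : T -> R} : measurable_fun setT X ->
  (forall w, (`|X w| <= 1)%R) -> X \in Lfun P 1.
Proof.
move=> mX hX; apply/Lfun1_integrable.
apply: (@le_integrable _ _ _ P setT _ (EFin \o X) (EFin \o cst 1%R)) => //.
- exact/measurable_EFinP.
- by move=> x _ /=; rewrite lee_fin normr1.
- by apply/Lfun1_integrable; exact: Lfun_cst.
Qed.

Lemma pm1_abs {X : T -> R} : pm1 X -> forall w, (`|X w| <= 1)%R.
Proof. by move=> h w; case: (h w) => ->; rewrite ?normrN normr1. Qed.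

Lemma pm1M {X Y : T -> R} : pm1 X -> pm1 Y -> pm1 (X \* Y)%R.
Proof.
move=> hX hY w /=; case: (hX w) => ->; case: (hY w) => ->;
  rewrite ?mulN1r ?mul1r ?opprK; by [left|right].
Qed.

Lemma key1 (U V : T -> R) : measurable_fun setT U -> measurable_fun setT V ->
  pm1 U -> pm1 V -> 'E_P[U] = (-1)%:E -> 'E_P[V] = (-1)%:E ->
  'E_P[(U \* V)%R] = 1.
Proof.
move=> mU mV pU pV EU EV.
have LU := Lfun_pm mU (pm1_abs pU).
have LV := Lfun_pm mV (pm1_abs pV).
have mUV : measurable_fun setT (U \* V)%R by exact: measurable_funM.
have LUV := Lfun_pm mUV (pm1_abs (pm1M pU pV)).
have L1 : (cst 1%R : T -> R) \in Lfun P 1 by exact: Lfun_cst.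
have L2 : (cst 2%R : T -> R) \in Lfun P 1 by exact: Lfun_cst.
have L2U : (cst 2%R \+ U)%R \in Lfun P 1 by exact: rpredD.
have mW : measurable_fun setT (fun x => 1 - U x * V x)%R.
  by apply: measurable_funB => //.
have mZ : measurable_fun setT (fun x => 2 + U x + V x)%R.
  by apply: measurable_funD => //; apply: measurable_funD.
have E0 : 'E_P[(cst 1%R \- (U \* V))%R] = 0.
  apply/le_anti/andP; split; last first.
    apply: expectation_ge0 => x /=.
    by case: (pU x) => ->; case: (pV x) => ->; lra.
  have -> : 0 = 'E_P[(cst 2%R \+ U \+ V)%R].
    rewrite expectationD ?expectationD ?expectation_cst ?EU ?EV //.
      by rewrite -!EFinD; congr EFin; lra.
  apply: expectation_le => //.
  - by move=> x /=; case: (pU x) => ->; case: (pV x) => ->; lra.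
  - by move=> x /=; case: (pU x) => ->; case: (pV x) => ->; lra.
  - apply: aeW => x /=; case: (pU x) => ->; case: (pV x) => ->; lra.
rewrite expectationB ?expectation_cst // in E0.
move: E0 (expectation_fin_num LUV); case: ('E_P[_]) => // r.
by rewrite -EFinB => /eqP; rewrite eqe subr_eq0 => /eqP <-.
Qed.

Lemma key2 (U V : T -> R) : measurable_fun setT U -> measurable_fun setT V ->
  pm1 U -> pm1 V -> 'E_P[U] = (-1)%:E -> 'E_P[V] = 1 ->
  'E_P[(U \* V)%R] = (-1)%:E.
Proof.
move=> mU mV pU pV EU EV.
have LU := Lfun_pm mU (pm1_abs pU).
have LV := Lfun_pm mV (pm1_abs pV).
have mUV : measurable_fun setT (U \* V)%R by exact: measurable_funM.
have LUV := Lfun_pm mUV (pm1_abs (pm1M pU pV)).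
have L1 : (cst 1%R : T -> R) \in Lfun P 1 by exact: Lfun_cst.
have L2 : (cst 2%R : T -> R) \in Lfun P 1 by exact: Lfun_cst.
have L2U : (cst 2%R \+ U)%R \in Lfun P 1 by exact: rpredD.
have E0 : 'E_P[(cst 1%R \+ (U \* V))%R] = 0.
  apply/le_anti/andP; split; last first.
    apply: expectation_ge0 => x /=.
    by case: (pU x) => ->; case: (pV x) => ->; lra.
  have -> : 0 = 'E_P[(cst 2%R \+ U \- V)%R].
    rewrite expectationB ?expectationD ?expectation_cst ?EU ?EV //.
      by rewrite -!EFinD; congr EFin; lra.
  apply: expectation_le => //.
  - by apply: measurable_funD => //.
  - by apply: measurable_funB => //; apply: measurable_funD.
  - by move=> x /=; case: (pU x) => ->; case: (pV x) => ->; lra.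
  - by move=> x /=; case: (pU x) => ->; case: (pV x) => ->; lra.
  - apply: aeW => x /=; case: (pU x) => ->; case: (pV x) => ->; lra.
rewrite expectationD ?expectation_cst // in E0.
move: E0 (expectation_fin_num LUV); case: ('E_P[_]) => // r.
by rewrite -EFinD => /eqP; rewrite eqe addrC addr_eq0 => /eqP ->.
Qed.
End key.

Section parts34.
Context {R : realType}.

Lemma part3 (d : measure_display) (T : measurableType d) (P : probability T R)
    (A1 A2 B1 B2 C : {RV P >-> R}) : model1 A1 A2 B1 B2 C ->
  'E_P[(A1 \* A2 \* B1 \* B2)%R] = 1%E.
Proof.
move=> [[[pA1 pA2 pB1 pB2 pC] _] [E1 E2 _ _]].
have -> : (A1 \* A2 \* B1 \* B2)%R = ((A1 \* B1 \* C) \* (A2 \* B2 \* C))%R :> (T -> R).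
  by apply/funext => w /=; case: (pC w) => ->; ring.
apply: key1 => //.
all: try by apply: pm1M => //; apply: pm1M.
all: try by apply: measurable_funM => //; apply: measurable_funM.
Qed.

Lemma part4 (d : measure_display) (T : measurableType d) (P : probability T R)
    (A1 A2 B1 B2 C : {RV P >-> R}) : model2 A1 A2 B1 B2 C ->
  'E_P[(A1 \* A2 \* B1 \* B2)%R] = (-1)%:E.
Proof.
move=> [[[pA1 pA2 pB1 pB2 pC] _] [E1 E2 _ _]].
have -> : (A1 \* A2 \* B1 \* B2)%R = ((A2 \* B1 \* C) \* (A1 \* B2 \* C))%R :> (T -> R).
  by apply/funext => w /=; case: (pC w) => ->; ring.
apply: key2 => //.
all: try by apply: pm1M => //; apply: pm1M.
all: try by apply: measurable_funM => //; apply: measurable_funM.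
Qed.
End parts34.
Section P8.
Context {R : realType}.
Lemma w8ge0 : (0 <= (8%:R : R)^-1)%R. Proof. by rewrite invr_ge0. Qed.
Definition w8 : {nonneg R} := NngNum w8ge0.
Definition P8 : set nat -> \bar R := msum (fun k => mscale w8 (@dirac _ nat k R)) 8.
HB.instance Definition _ := Measure.on P8.
Lemma P8E A : P8 A = \sum_(k < 8) ((8%:R : R)^-1)%R%:E * \d_(k : nat) A.
Proof. by []. Qed.
Lemma P8T : P8 setT = 1.
Proof.
rewrite P8E.
under eq_bigr do rewrite diracT mule1.
rewrite sumEFin big_const_ord; congr EFin.
rewrite !iterS /= addr0.
field.
by [].
Qed.
HB.instance Definition _ := Measure_isProbability.Build _ _ R P8 P8T.
End P8.
Section int8.
Context {R : realType}.
Lemma int8 (f : nat -> R) : 'E_(@P8 R)[f] = (\sum_(k < 8) f k * 8%:R^-1)%R%:E.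
Proof.
rewrite unlock.
have -> : \int[P8]_x (f x)%:E = \int[msum (fun k => mscale w8 (@dirac _ nat k R)) 8]_x (f x)%:E by [].
rewrite integralE.
rewrite !ge0_integral_measure_sum //.
under eq_bigr do rewrite ge0_integral_mscale //= integral_dirac //= diracT mul1e.
under [X in _ - X]eq_bigr do rewrite ge0_integral_mscale //= integral_dirac //= diracT mul1e.
have hp i : ((8^-1)%:E * (fun x : nat => (f x)%:E)^\+ i = (8^-1 * Num.max (f i) 0%R)%:E)%E.
  by rewrite funeposE /= -EFin_max EFinM.
have hn i : ((8^-1)%:E * (fun x : nat => (f x)%:E)^\- i = (8^-1 * Num.max (- f i) 0%R)%:E)%E.
  by rewrite funenegE /= -EFin_max EFinM.
under eq_bigr do rewrite hp.
under [X in _ - X]eq_bigr do rewrite hn.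
rewrite !sumEFin -EFinB -sumrB; congr EFin; apply: eq_bigr => i _.
rewrite -mulrBr mulrC; congr (_ * _)%R.
rewrite /Num.max /Order.max /=; case: ifP => h1; case: ifP => h2; lra.
Qed.
End int8.

Section models.
Context {R : realType}.
Notation sg b := (if b then (-1)%R else 1%R : R).

Lemma mfun_nat (f : nat -> R) : f \in mfun.
Proof. by rewrite inE; move=> _ Y _. Qed.

Definition mkRV (f : nat -> R) : {RV (@P8 R) >-> R} := mfun_Sub (mfun_nat f).

Definition a1 := mkRV (fun n => sg (odd n)).
Definition a2 := mkRV (fun n => sg (odd n./2)).
Definition b1 := mkRV (fun n => sg (odd n./2./2)).
Definition b2 := mkRV (fun n => sg (odd n (+) odd n./2 (+) odd n./2./2)).
Definition c1 := mkRV (fun n => sg (~~ (odd n (+) odd n./2./2))).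
Definition b2' := mkRV (fun n => sg (~~ (odd n (+) odd n./2 (+) odd n./2./2))).
Definition c2 := mkRV (fun n => sg (~~ (odd n./2 (+) odd n./2./2))).

Lemma pm1_sg (g : nat -> bool) : pm1 (fun n => sg (g n)).
Proof. by move=> w; case: (g w); [right|left]. Qed.

Ltac ex8 := rewrite int8 !big_ord_recl big_ord0 /=; congr EFin; lra.

Lemma model1_ok : model1 a1 a2 b1 b2 c1.
Proof.
repeat split.
all: try exact: pm1_sg.
all: ex8.
Qed.

Lemma model2_ok : model2 a1 a2 b1 b2' c2.
Proof.
repeat split.
all: try exact: pm1_sg.
all: ex8.
Qed.
End models.

Section part5.
Context {R : realType}.
Notation sg b := (if b then (-1)%R else 1%R : R).

Lemma P8_bij (f : 'I_8 -> 'I_8) (hf : injective f) (E1 E2 : set nat) :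
  (forall k : 'I_8, E1 k <-> E2 (f k)) -> (@P8 R) E1 = P8 E2.
Proof.
move=> h; rewrite !P8E [RHS](reindex_inj hf) /=; apply: eq_bigr => k _.
rewrite !diracE.
have -> : ((k : nat) \in E1) = ((f k : nat) \in E2) by apply/idP/idP => /set_mem/(h k)/mem_set.
by [].
Qed.

Definition fl (m : nat) (k : 'I_8) : 'I_8 :=
  inord (if odd (k %/ 2 ^ m) then k - 2 ^ m else k + 2 ^ m)%N.

Lemma fl_inv m : (m < 3)%N -> involutive (fl m).
Proof.
case: m => [|[|[|m]]] // _ k; apply: val_inj;
  case: k => -[|[|[|[|[|[|[|[|k]]]]]]]] // Hk; rewrite /fl /= ?inordK //=.
Qed.

Lemma swapj (j : 'I_4) : exists f : 'I_8 -> 'I_8, injective f /\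
  forall (k : 'I_8) (i : 'I_4), i != j ->
    fam4 (@a1 R) a2 b1 b2' i (f k) = fam4 a1 a2 b1 b2 i k.
Proof.
case: j => -[|[|[|[|j]]]] // Hj.
- exists (fl 0); split; first exact/inv_inj/fl_inv.
  move=> k i; case: i => -[|[|[|[|i]]]] // Hi;
  case: k => -[|[|[|[|[|[|[|[|k]]]]]]]] // Hk; rewrite /fl /= ?inordK //=.
- exists (fl 1); split; first exact/inv_inj/fl_inv.
  move=> k i; case: i => -[|[|[|[|i]]]] // Hi;
  case: k => -[|[|[|[|[|[|[|[|k]]]]]]]] // Hk; rewrite /fl /= ?inordK //=.
- exists (fl 2); split; first exact/inv_inj/fl_inv.
  move=> k i; case: i => -[|[|[|[|i]]]] // Hi;
  case: k => -[|[|[|[|[|[|[|[|k]]]]]]]] // Hk; rewrite /fl /= ?inordK //=.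
- exists id; split; first exact: inj_id.
  move=> k i; case: i => -[|[|[|[|i]]]] // Hi;
  case: k => -[|[|[|[|[|[|[|[|k]]]]]]]] // Hk.
Qed.

Lemma part5 (S : {set 'I_4}) (s : 'I_4 -> R) : (S != [set: 'I_4])%SET ->
  (@P8 R) (joint_event (fam4 (@a1 R) a2 b1 b2) S s)
  = P8 (joint_event (fam4 (@a1 R) a2 b1 b2') S s).
Proof.
move=> hS.
have [j hj] : exists j, j \notin S.
  case: (pickP (fun j => j \notin S)) => [j hj|h]; first by exists j.
  have eS : S = [set: 'I_4]%SET by apply/setP => x; rewrite inE; apply/negbFE; exact: h x.
  by rewrite eS eqxx in hS.
have [f [hf hfam]] := swapj j.
apply: (P8_bij _ hf).
move=> k; rewrite /joint_event /=; split => h i iS.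
  have ij : i != j by apply/eqP => ij; move: hj; rewrite -ij iS.
  by rewrite hfam //; exact: h.
have ij : i != j by apply/eqP => ij; move: hj; rewrite -ij iS.
by rewrite -hfam //; exact: h.
Qed.
End part5.

Theorem mainTheorem4 (R : realType) :
  (* existence of a model for k = 1 *)
  (exists (d : measure_display) (T : measurableType d) (P : probability T R)
          (A1 A2 B1 B2 C : {RV P >-> R}), model1 A1 A2 B1 B2 C) /\
  (* existence of a model for k = 2 *)
  (exists (d : measure_display) (T : measurableType d) (P : probability T R)
          (A1 A2 B1 B2 C : {RV P >-> R}), model2 A1 A2 B1 B2 C) /\
  (* every model for k = 1 has <A1 A2 B1 B2> = 1 *)
  (forall (d : measure_display) (T : measurableType d) (P : probability T R)
          (A1 A2 B1 B2 C : {RV P >-> R}), model1 A1 A2 B1 B2 C ->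
     'E_P[(A1 \* A2 \* B1 \* B2)%R] = 1%E) /\
  (* every model for k = 2 has <A1 A2 B1 B2> = -1 *)
  (forall (d : measure_display) (T : measurableType d) (P : probability T R)
          (A1 A2 B1 B2 C : {RV P >-> R}), model2 A1 A2 B1 B2 C ->
     'E_P[(A1 \* A2 \* B1 \* B2)%R] = (-1)%:E) /\
  (* two models whose (A1,A2,B1,B2) agree in the joint law of every proper subfamily *)
  (exists (d1 : measure_display) (T1 : measurableType d1) (P1 : probability T1 R)
          (A1 A2 B1 B2 C1 : {RV P1 >-> R})
          (d2 : measure_display) (T2 : measurableType d2) (P2 : probability T2 R)
          (A1' A2' B1' B2' C2 : {RV P2 >-> R}),
     model1 A1 A2 B1 B2 C1 /\ model2 A1' A2' B1' B2' C2 /\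
     forall (S : {set 'I_4}) (s : 'I_4 -> R), (S != [set: 'I_4])%SET ->
       P1 (joint_event (fam4 A1 A2 B1 B2) S s)
       = P2 (joint_event (fam4 A1' A2' B1' B2') S s)).
Proof.
split; [|split; [|split; [|split]]].
- by exists _, nat, P8, a1, a2, b1, b2, c1; exact: model1_ok.
- by exists _, nat, P8, a1, a2, b1, b2', c2; exact: model2_ok.
- by move=> d T P A1 A2 B1 B2 C; exact: part3.
- by move=> d T P A1 A2 B1 B2 C; exact: part4.
- exists _, nat, P8, a1, a2, b1, b2, c1, _, nat, P8, a1, a2, b1, b2', c2.
  split; first exact: model1_ok.
  split; first exact: model2_ok.
  exact: part5.
Qed.
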